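(* Let $F$ be a field, $t\ge 1$, and let $e_1,\dots,e_t\in M_n(F)$ be nonzero pairwise orthogonal idempotents ($e_ie_j=0$ for $i\ne j$, $e_i^2=e_i$) with $e_1+\cdots+e_t=I_n$; let $n_i=\mathrm{rank}(e_i)$. Let $\sigma_1,\dots,\sigma_t\in F$ be such that $\sum_{i=1}^t\sigma_ik_i\ne 0$ in $F$ for every integer $t$-tuple $(k_1,\dots,k_t)\ne\vec 0$ with $0\le k_i\le n_i$ for all $i$. Then $$V=\Big\{a\in M_n(F):\ e_iae_j=0 \text{ for all } 1\le i<j\le t,\ \ \sum_{i=1}^t\sigma_i\,\mathrm{Tr}(e_iae_i)=0\Big\}$$ (the matrices which are block lower triangular with respect to $e_1,\dots,e_t$ and whose diagonal blocks $a_{ii}=e_iae_i$ satisfy $\sum_i\sigma_i\mathrm{Tr}(a_{ii})=0$) is a Mathieu subspace of $M_n(F)$.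
   Context: Let $\mathcal A$ be an associative algebra over a field $F$. An $F$-subspace $M\subseteq\mathcal A$ is a Mathieu subspace (MS) of $\mathcal A$ if for all $a,b,c\in\mathcal A$ such that $a^m\in M$ for all $m\ge 1$, there exists $N$ (depending on $a,b,c$) such that $ba^mc\in M$ for all $m\ge N$. *)

(* Defs.v *)
From mathcomp Require Import all_boot all_order all_algebra.
Set Implicit Arguments. Unset Strict Implicit. Unset Printing Implicit Defensive.
Import GRing.Theory.
Local Open Scope ring_scope.

Definition is_Fsubspace (F : fieldType) (n : nat) (M : 'M[F]_n -> Prop) :=
  M 0 /\ (forall (k : F) (x y : 'M[F]_n), M x -> M y -> M (k *: x + y)).

Definition mathieu_subspace (F : fieldType) (n : nat) (M : 'M[F]_n -> Prop) :=
  is_Fsubspace M /\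
  (forall a b c : 'M[F]_n, (forall m : nat, (1 <= m)%N -> M (a ^+ m)) ->
     exists N : nat, forall m : nat, (N <= m)%N -> M (b * a ^+ m * c)).

(* Main.v *)
Require Import Defs.
From mathcomp Require Import all_boot all_order all_algebra.
Set Implicit Arguments. Unset Strict Implicit. Unset Printing Implicit Defensive.
Import GRing.Theory.
Local Open Scope ring_scope.

Lemma tr_idem (F : fieldType) m (Q : 'M[F]_m) : Q *m Q = Q -> \tr Q = (\rank Q)%:R.
Proof.
move=> QQ.
have [D DC] := row_fullP (col_base_full Q).
have [B RB] := row_freeP (row_base_free Q).
have QE : col_base Q *m row_base Q = Q by exact: mulmx_base.
move: (col_base Q) (row_base Q) DC RB QE => C R DC RB QE.
have RC : R *m C = 1%:M.
  have h : C *m (R *m C) *m R = C *m 1%:M *m R.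
    by rewrite mulmx1 !mulmxA QE -mulmxA QE QQ.
  move: (congr1 (fun X => D *m X *m B) h) => /=.
  by rewrite !mulmxA DC !mul1mx -!mulmxA RB !mulmx1.
by rewrite -{1}QE mxtrace_mulC RC mxtrace1.
Qed.
Lemma split_mid (F : fieldType) n t (e : 'I_t -> 'M[F]_n) (X Y : 'M_n) :
  (forall i, e i *m e i = e i) -> \sum_i e i = 1%:M ->
  X *m Y = \sum_k (X *m e k) *m (e k *m Y).
Proof.
move=> ei es.
rewrite -{1}(mulmx1 X) -es mulmx_sumr mulmx_suml; apply: eq_bigr => k _.
by rewrite !mulmxA -(mulmxA X (e k) (e k)) ei.
Qed.

Lemma sl_zero (F : fieldType) n t (e : 'I_t -> 'M[F]_n) (P : 'M_n) :
  (forall i, e i *m e i = e i) -> (forall i j, i != j -> e i *m e j = 0) ->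
  \sum_i e i = 1%:M ->
  (forall i j : 'I_t, (i <= j)%N -> e i *m P *m e j = 0) -> P *m P = P -> P = 0.
Proof.
move=> ei eo es hP PP.
have key : forall m (i j : 'I_t), (i < j + m)%N ->
    e i *m iter m (mulmx P) 1%:M *m e j = 0.
  elim=> [|m IH] i j lt.
    by rewrite /= mulmx1 eo // neq_ltn; rewrite addn0 in lt; rewrite lt.
  rewrite iterS mulmxA -(mulmxA (e i *m P)) (split_mid _ _ ei es) big1 // => k _.
  have [ki|ik] := leqP i k.
    by rewrite hP // mul0mx.
  rewrite (mulmxA (e k)) IH ?mulmx0 //.
  by rewrite addnS ltnS in lt; exact: leq_trans ik lt.
have Pm : forall m, iter m.+1 (mulmx P) 1%:M = P.
  by elim=> [|m IH] /=; rewrite ?mulmx1 // -/(iter m.+1 _ _) IH.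
rewrite -(mulmx1 P) -(mul1mx P) -es mulmx_suml mulmx_sumr big1 // => j _.
rewrite mulmx_suml big1 // => i _.
have t0 : (0 < t)%N := leq_ltn_trans (leq0n i) (ltn_ord i).
have -> : P = iter t (mulmx P) 1%:M by rewrite -(prednK t0) Pm.
by rewrite key // (leq_trans (ltn_ord i)) // leq_addl.
Qed.


Definition Vp (F : fieldType) n t (e : 'I_t -> 'M[F]_n) (sigma : 'I_t -> F)
  (a : 'M[F]_n) : Prop :=
  (forall i j : 'I_t, (i < j)%N -> e i *m a *m e j = 0) /\
  \sum_(i < t) sigma i * \tr (e i *m a *m e i) = 0.

Lemma V_sub (F : fieldType) n t (e : 'I_t -> 'M[F]_n) (sigma : 'I_t -> F) :
  is_Fsubspace (Vp e sigma).
Proof.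
split.
  split=> [i j _|]; first by rewrite mulmx0 mul0mx.
  by rewrite big1 // => i _; rewrite mulmx0 mul0mx mxtrace0 mulr0.
move=> k x y [hx1 hx2] [hy1 hy2]; split=> [i j ij|].
  by rewrite mulmxDr mulmxDl -scalemxAr -scalemxAl hx1 // hy1 // scaler0 addr0.
under eq_bigr => i _ do rewrite mulmxDr mulmxDl -scalemxAr -scalemxAl mxtraceD mxtraceZ mulrDr mulrCA.
by rewrite big_split /= -mulr_sumr hx2 hy2 mulr0 addr0.
Qed.

Lemma nilp (F : fieldType) n t (e : 'I_t -> 'M[F]_n.+1) (sigma : 'I_t -> F)
  (e_idem : forall i, e i *m e i = e i)
  (e_orth : forall i j, i != j -> e i *m e j = 0)
  (e_sum : \sum_(i < t) e i = 1%:M)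
  (hsigma : forall k : 'I_t -> nat,
     (exists i, k i != 0%N) ->
     (forall i, (k i <= \rank (e i))%N) ->
     \sum_(i < t) sigma i * (k i)%:R != 0)
  (a : 'M[F]_n.+1) :
  (forall m : nat, (1 <= m)%N -> Vp e sigma (a ^+ m)) -> exists N, a ^+ N = 0.
Proof.
move=> ha.
have [V0 Vc] := V_sub e sigma.
set chi := char_poly a.
have chi0 : chi != 0 by apply: monic_neq0; exact: char_poly_monic.
have [k [g]] := multiplicity_XsubC chi 0.
rewrite chi0 /= polyC0 subr0 => g0 chiE.
have cop : coprimep ('X^(k.+1)) g.
  by apply: coprimep_expl; rewrite coprimep_sym coprimepX.
have [[u v] /= huv] := Bezout_eq1_coprimepP _ _ cop.
set p := u * 'X^(k.+1).
set P := horner_mx a p.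
have hXchi : horner_mx a ('X^(k.+1) * g) = 0.
  by rewrite exprS -mulrA [_ ^+ k * g]mulrC -chiE rmorphM /= Cayley_Hamilton mulr0.
have PP : P *m P = P.
  have : horner_mx a (p * (v * g)) = 0.
    by rewrite /p mulrACA rmorphM /= hXchi mulr0.
  have -> : v * g = 1 - p by rewrite -huv /p addrC addKr.
  rewrite mulrBr mulr1 rmorphB /= => /eqP; rewrite subr_eq0 (rmorphM _ p p) => /eqP h.
  by rewrite mulmxE /P; exact: (esym h).
have VP : Vp e sigma P.
  rewrite /P -(coefK p) poly_def linear_sum /=.
  apply: (big_ind (Vp e sigma)) => //.
    by move=> x y Vx Vy; rewrite -(scale1r x); exact: Vc.
  move=> i _; rewrite linearZ /= rmorphXn /= horner_mx_X.
  case: (posnP i) => [i0|ip].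
    by rewrite /p coefMXn i0 /= scale0r.
  by rewrite -(addr0 (_ *: _)); apply: Vc => //; apply: ha.
have [hlow hsum] := VP.
have Qid : forall i, (e i *m P *m e i) *m (e i *m P *m e i) = e i *m P *m e i.
  move=> i.
  have h1 : e i *m P *m e i = e i *m P *m (P *m e i) by rewrite mulmxA -(mulmxA (e i) P P) PP.
  rewrite [RHS]h1 (split_mid (e i *m P) (P *m e i) e_idem e_sum) (bigD1 i) //= big1 ?addr0.
    by rewrite !mulmxA.
  move=> j ji.
  have [ij|ji'] := ltnP i j; first by rewrite hlow // mul0mx.
  have jl : (j < i)%N by rewrite ltn_neqAle ji' andbT.
  by rewrite (mulmxA (e j) P) (hlow j i jl) mulmx0.
have Q0 : forall i, e i *m P *m e i = 0.
  have hr : [forall i, \rank (e i *m P *m e i) == 0%N].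
    apply/negPn/negP => /forallPn hex.
    have hle : forall i, (\rank (e i *m P *m e i) <= \rank (e i))%N.
      by move=> i; exact: leq_trans (mxrankM_maxl _ _) (mxrankM_maxl _ _).
    have /negP := hsigma (fun i => \rank (e i *m P *m e i)) hex hle; apply.
    rewrite -[X in _ == X]hsum; apply/eqP/eq_bigr => i _.
    by rewrite (tr_idem (Qid i)).
  by move=> i; apply/eqP; rewrite -mxrank_eq0 (forallP hr i).
have P0 : P = 0.
  apply: (sl_zero e_idem e_orth e_sum) => // i j.
  rewrite leq_eqVlt => /orP [/eqP ij|ij]; last exact: hlow.
  by have -> : i = j by apply: val_inj. 
exists k.+1.
have -> : a ^+ k.+1 = horner_mx a ('X^(k.+1) * (u * 'X^(k.+1) + v * g)).
  by rewrite huv mulr1 rmorphXn /= horner_mx_X.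
have P0' : horner_mx a p = 0 := P0.
rewrite mulrDr [_ * (u * _)]mulrC mulrCA -/p rmorphD /= (rmorphM _ p) (rmorphM _ v) /=.
by rewrite P0' hXchi mul0r mulr0 addr0.
Qed.

Theorem mainTheorem2 (F : fieldType) (n t : nat) (e : 'I_t -> 'M[F]_n)
  (sigma : 'I_t -> F)
  (ht : (1 <= t)%N)
  (e_nz : forall i, e i != 0)
  (e_idem : forall i, e i *m e i = e i)
  (e_orth : forall i j, i != j -> e i *m e j = 0)
  (e_sum : \sum_(i < t) e i = 1%:M)
  (hsigma : forall k : 'I_t -> nat,
     (exists i, k i != 0%N) ->
     (forall i, (k i <= \rank (e i))%N) ->
     \sum_(i < t) sigma i * (k i)%:R != 0) :
  mathieu_subspace
    (fun a : 'M[F]_n =>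
       (forall i j : 'I_t, (i < j)%N -> e i *m a *m e j = 0) /\
       \sum_(i < t) sigma i * \tr (e i *m a *m e i) = 0).
Proof.
change (mathieu_subspace (Vp e sigma)).
split; first exact: V_sub.
move=> a b c ha.
have [N hN] : exists N, a ^+ N = 0.
  destruct n as [|n'].
    by exists 1%N; rewrite expr1; apply/matrixP => -[].
  exact: (nilp e_idem e_orth e_sum hsigma ha).
exists N => m hm.
rewrite -(subnK hm) exprD hN mulr0 mulr0 mul0r.
exact: (V_sub e sigma).1.
Qed.
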